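(* Let $Q$ be a finite acyclic quiver with automorphism $\sigma$ and let $\alpha\in\mathcal F_{Q,\sigma}$. Then every primitive element $x\in\mathcal H_v(Q,\sigma)^{\rm prim}_\alpha$ satisfies $\mathbb I_\alpha(x)=\{x,\mathbf 1_\alpha\}=0$; that is, $\mathcal H_v(Q,\sigma)^{\rm prim}_\alpha\subseteq\operatorname{Ker}\mathbb I_\alpha$.
   Context: Let $Q=(Q_0,Q_1)$ be a finite quiver and $\sigma$ an automorphism of $Q$ (a permutation of vertices and arrows compatible with heads and tails). Let $\mathbb F_q$ be a finite field, $\overline{\mathbb F}_q$ its algebraic closure, $F:\overline{\mathbb F}_qQ\to\overline{\mathbb F}_qQ$, $\sum_sx_sp_s\mapsto\sum_sx_s^q\sigma(p_s)$, and $A=\mathfrak A(Q,\sigma;q)=\{a:F(a)=a\}$ (a hereditary $\mathbb F_q$-algebra, finite-dimensional when $Q$ is acyclic). Let $I$ be the set of $\sigma$-orbits of vertices, $\Gamma_1$ the set of $\sigma$-orbits of arrows, $\varepsilon_i,\varepsilon_\rho$ the orbit sizes, and $t\rho,h\rho\in I$ the tail/head orbits of $\rho\in\Gamma_1$; $\Gamma=\Gamma(Q,\sigma)$ is the valued quiver with vertices $I$ and arrows $\Gamma_1$. Euler form: $\langle x,y\rangle=\sum_i\varepsilon_ix_iy_i-\sum_{\rho\in\Gamma_1}\varepsilon_\rho x_{t\rho}y_{h\rho}$ on $\mathbb ZI$; symmetric Euler form $(x,y)=\langle x,y\rangle+\langle y,x\rangle$. The dimension vector of an $A$-module $M$ is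 $\mathbf{dim}M=\sum_i(\dim_{\mathbb F_{q^{\varepsilon_i}}}e_iM)i$, $e_i$ the idempotent of $A$ for $i\in I$. The fundamental set is $\mathcal F_{Q,\sigma}=\{\mu\in\mathbb NI:$ the full subquiver of $\Gamma$ on $\{i:\mu_i\ne0\}$ is connected and $(\mu,i)\le0$ for all $i\in I\}$. With $F^L_{M,N}$ the number of submodules $X\subseteq L$ with $X\cong N$, $L/X\cong M$, $a_M=|\mathrm{Aut}_A(M)|$ and $v=\sqrt q$, the Ringel–Hall algebra $\mathcal H_v(Q,\sigma)$ has $\mathbb C$-basis the isoclasses $[M]$ of finite-dimensional $A$-modules, product $[M][N]=\sum_{[L]}v^{\langle\mathbf{dim}M,\mathbf{dim}N\rangle}F^L_{M,N}[L]$, coproduct $\Delta([M])=\sum_{[X],[Y]}v^{\langle\mathbf{dim}X,\mathbf{dim}Y\rangle}\frac{a_Xa_Y}{a_M}F^M_{X,Y}[X]\otimes[Y]$, unit $1=[0]$, and $\mathbb NI$-grading by dimension vectors. $\mathcal H_v(Q,\sigma)^{\rm prim}_{\mathbf d}=\{x\in\mathcal H_v(Q,\sigma)_{\mathbf d}:\Delta(x)=x\otimes1+1\otimes x\}$. The Green form is $\{[M],[N]\}=\delta_{[M],[N]}/a_M$. Put $\mathbf 1_{\mathbf d}=\sum_{[M]:\mathbf{dim}M=\mathbf d}[M]$ and $\mathbb I_{\mathbf d}:\mathcal H_v(Q,\sigma)_{\mathbf d}\to\mathbb C$, $[M]\mapsto 1/a_M$, so $\mathbb I_{\mathbf d}(x)=\{x,\mathbf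 1_{\mathbf d}\}$. *)

(* Defs.v *)
From HB Require Import structures.
From mathcomp Require Import all_boot all_order fingroup perm all_algebra.
Set Implicit Arguments. Unset Strict Implicit. Unset Printing Implicit Defensive.
Import Order.TTheory GRing.Theory Num.Theory.
Local Open Scope ring_scope.

Record quiver := Quiver { Q0 : finType; Q1 : finType; tl : Q1 -> Q0; hd : Q1 -> Q0 }.

Definition arrel (Q : quiver) : rel (Q1 Q) := fun a b => hd a == tl b.

Definition acyclic (Q : quiver) : Prop :=
  forall (a : Q1 Q) (s : seq (Q1 Q)), path (@arrel Q) a s -> hd (last a s) != tl a.

Definition quiver_aut (Q : quiver) (s0 : {perm Q0 Q}) (s1 : {perm Q1 Q}) : Prop :=
  forall a : Q1 Q, @tl Q (s1 a) = s0 (@tl Q a) /\ @hd Q (s1 a) = s0 (@hd Q a).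

Section Hall.
Variables (Q : quiver) (s0 : {perm Q0 Q}) (s1 : {perm Q1 Q}).
Variables (k L : finFieldType) (emb : {rmorphism k -> L}).

(* I = porbits s0 (orbits of vertices), Gamma_1 = porbits s1 ;
   vectors in ZI / NI are functions {set Q0} -> nat read on I. *)
Definition Iset := porbits s0.
Definition Gam1 := porbits s1.
Definition torb (r : {set Q1 Q}) : {set Q0 Q} := (@tl Q) @: r.
Definition horb (r : {set Q1 Q}) : {set Q0 Q} := (@hd Q) @: r.

Definition euler (x y : {set Q0 Q} -> nat) : int :=
  \sum_(i in Iset) (#|i| * x i * y i)%:Z
  - \sum_(r in Gam1) (#|r| * x (torb r) * y (horb r))%:Z.
Definition symeuler (x y : {set Q0 Q} -> nat) : int := euler x y + euler y x.
Definition unitv (i : {set Q0 Q}) : {set Q0 Q} -> nat := fun j => (j == i : nat).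

Definition supp (mu : {set Q0 Q} -> nat) : {set {set Q0 Q}} :=
  [set i in Iset | mu i != 0%N].
Definition Gadj (S : {set {set Q0 Q}}) : rel {set Q0 Q} := fun i j =>
  [&& i \in S, j \in S &
   [exists r in Gam1, ((torb r == i) && (horb r == j)) || ((torb r == j) && (horb r == i))]].
Definition in_fundamental (mu : {set Q0 Q} -> nat) : Prop :=
  (forall i j, i \in supp mu -> j \in supp mu -> connect (Gadj (supp mu)) i j) /\
  (forall i, i \in Iset -> symeuler mu (unitv i) <= 0).

(* a path is (start vertex, arrows in order of traversal); allpaths lists all
   paths with < #|Q0|+1 arrows, which contains all paths when Q is acyclic *)
Definition seqs_of_len (l : nat) : seq (seq (Q1 Q)) := [seq val t | t : l.-tuple (Q1 Q)].
Definition allpaths : seq (Q0 Q * seq (Q1 Q)) :=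
  [seq (v, [::]) | v <- enum (Q0 Q)] ++
  [seq (@tl Q a, a :: s) | a <- enum (Q1 Q),
     s <- filter (path (@arrel Q) a) (flatten [seq seqs_of_len l | l <- iota 0 #|Q0 Q|])].
Definition Path := seq_sub allpaths.
Definition pstart (p : Path) : Q0 Q := (val p).1.
Definition pend (p : Path) : Q0 Q := last (val p).1 (map (@hd Q) (val p).2).

Definition PA := {ffun Path -> L}.
Definition addPA (f g : PA) : PA := [ffun p => f p + g p].
(* product: p * q = "q then p" (composition), defined when pend q = pstart p *)
Definition mulPA (f g : PA) : PA := [ffun r : Path =>
  \sum_(p : Path) \sum_(q : Path | (pend q == pstart p) &&
        ((pstart q, (val q).2 ++ (val p).2) == val r)) f p * g q].
Definition onePA : PA := [ffun p : Path => ((val p).2 == [::])%:R].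
Definition scalePA (c : k) (f : PA) : PA := [ffun p => emb c * f p].
Definition spath (x : Q0 Q * seq (Q1 Q)) : Q0 Q * seq (Q1 Q) := (s0 x.1, map s1 x.2).
Definition Frob (f : PA) : PA :=
  [ffun p : Path => \sum_(p' : Path | spath (val p') == val p) (f p') ^+ #|k|].
Definition Aalg : pred PA := fun f => Frob f == f.
Definition evec (i : {set Q0 Q}) : PA :=
  [ffun p : Path => (((val p).2 == [::]) && ((val p).1 \in i))%:R].

(* an A-module with underlying space k^m (column vectors), a . v = r a *m v;
   r is set to 0 outside A *)
Definition is_modb (m : nat) (r : {ffun PA -> 'M[k]_m}) : bool :=
  [&& r onePA == 1%:M,
      [forall f, (f \notin Aalg) ==> (r f == 0)],
      [forall f, [forall g, ((f \in Aalg) && (g \in Aalg)) ==>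
         ((r (addPA f g) == r f + r g) && (r (mulPA f g) == r f *m r g))]] &
      [forall c, [forall f, (f \in Aalg) ==> (r (scalePA c f) == c *: r f)]]].
Definition Mod (m : nat) := {r : {ffun PA -> 'M[k]_m} | is_modb r}.

Definition hom m n (M : Mod m) (N : Mod n) (f : 'M[k]_(n, m)) : bool :=
  [forall a, f *m val M a == val N a *m f].
Definition injb m n (f : 'M[k]_(n, m)) : bool :=
  [forall v : 'cV[k]_m, (f *m v == 0) ==> (v == 0)].
Definition surjb m n (f : 'M[k]_(n, m)) : bool :=
  [forall w : 'cV[k]_n, [exists v : 'cV[k]_m, f *m v == w]].
Definition isob m n (M : Mod m) (N : Mod n) : bool :=
  [exists f : 'M[k]_(n, m), [&& hom M N f, injb f & surjb f]].
Definition aut m (M : Mod m) : nat :=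
  #|[set f : 'M[k]_m | [&& hom M M f, injb f & surjb f]]|.
(* F^M_{X,Y} = #{ submodules Z of M | Z ~ Y, M/Z ~ X } *)
Definition hallnum l m1 m2 (M : Mod l) (X : Mod m1) (Y : Mod m2) : nat :=
  #|[set Z : {set 'cV[k]_l} |
      [exists f : 'M[k]_(l, m2), [&& hom Y M f, injb f & Z == [set f *m v | v : 'cV[k]_m2]]] &&
      [exists g : 'M[k]_(m1, l), [&& hom M X g, surjb g & Z == [set v | g *m v == 0]]]]|.

(* dimension vector: (dim M)_i = dim_{F_{q^eps_i}} e_i M = dim_{F_q}(e_i M) / eps_i *)
Definition dimv m (M : Mod m) : {set Q0 Q} -> nat :=
  fun i => (\rank (val M (evec i)) %/ #|i|)%N.
Definition has_dimv m (M : Mod m) (d : {set Q0 Q} -> nat) : Prop :=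
  forall i, i \in Iset -> dimv M i = d i.
Definition has_dimvb m (M : Mod m) (d : {set Q0 Q} -> nat) : bool :=
  [forall i in Iset, dimv M i == d i].
Definition totdim (d : {set Q0 Q} -> nat) : nat := (\sum_(i in Iset) #|i| * d i)%N.

Variable C : numClosedFieldType.

Definition classes m : {set {set Mod m}} := [set [set N | isob M N] | M : Mod m].
Definition sum_cls m (F : Mod m -> C) : C :=
  \sum_(Cl in classes m) (if [pick M in Cl] is Some M then F M else 0).

Definition vpar : C := sqrtC (#|k|%:R).

(* An element x of H_v(Q,sigma) is recorded by its coefficients: x M = coefficient
   of [M]; it is an isomorphism-invariant function. *)
Definition hall_elem (x : forall m, Mod m -> C) : Prop :=
  forall m n (M : Mod m) (N : Mod n), isob M N -> x m M = x n N.
Definition homogeneous (x : forall m, Mod m -> C) (d : {set Q0 Q} -> nat) : Prop :=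
  hall_elem x /\ forall m (M : Mod m), x m M != 0 -> has_dimv M d.

Definition coprod_coef (x : forall m, Mod m -> C) m1 m2 (X : Mod m1) (Y : Mod m2) : C :=
  sum_cls (fun M : Mod (m1 + m2) =>
    x _ M * vpar ^ (euler (dimv X) (dimv Y)) * (aut X)%:R * (aut Y)%:R / (aut M)%:R
      * (hallnum M X Y)%:R).

(* Delta(x) = x (x) 1 + 1 (x) x, where 1 = [0] is the class of the zero module *)
Definition primitive (x : forall m, Mod m -> C) : Prop :=
  forall m1 m2 (X : Mod m1) (Y : Mod m2),
    coprod_coef x X Y = (if m2 == 0%N then x m1 X else 0) + (if m1 == 0%N then x m2 Y else 0).

Definition Iform (x : forall m, Mod m -> C) (d : {set Q0 Q} -> nat) : C :=
  sum_cls (fun M : Mod (totdim d) => if has_dimvb M d then x _ M / (aut M)%:R else 0).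

End Hall.

(* Main.v *)
Require Import Defs.
From HB Require Import structures.
From mathcomp Require Import all_boot all_order fingroup perm all_algebra.
Set Implicit Arguments. Unset Strict Implicit. Unset Printing Implicit Defensive.
Import Order.TTheory GRing.Theory Num.Theory.
From mathcomp Require Import zify.
From mathcomp Require Import ring.
Section Comb.
Variables (Q : quiver) (s0 : {perm Q0 Q}) (s1 : {perm Q1 Q}).
Hypothesis haut : quiver_aut s0 s1.
Hypothesis hacyc : acyclic Q.

Definition Erel : rel (Q0 Q) := fun v u => [exists a : Q1 Q, (tl a == v) && (hd a == u)].
Definition ob (v : Q0 Q) := porbit s0 v.

Lemma tl_s1 a : tl (s1 a) = s0 (tl a). Proof. by case: (haut a). Qed.
Lemma hd_s1 a : hd (s1 a) = s0 (hd a). Proof. by case: (haut a). Qed.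
Lemma tl_iter n a : tl (iter n s1 a) = iter n s0 (tl a).
Proof. by elim: n => //= n IH; rewrite tl_s1 IH. Qed.
Lemma hd_iter n a : hd (iter n s1 a) = iter n s0 (hd a).
Proof. by elim: n => //= n IH; rewrite hd_s1 IH. Qed.

Lemma Erel_iter n v u : Erel v u -> Erel (iter n s0 v) (iter n s0 u).
Proof.
move=> /existsP[a /andP[/eqP<- /eqP<-]]; apply/existsP; exists (iter n s1 a).
by rewrite tl_iter hd_iter !eqxx.
Qed.

Lemma connect_iter n v u : connect Erel v u -> connect Erel (iter n s0 v) (iter n s0 u).
Proof.
move/connectP=> [p pp ->]; elim: p v pp => [|w p IH] v /=; first by rewrite connect0.
by move/andP=> [e pe]; apply: connect_trans (connect1 (Erel_iter n e)) (IH _ pe).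
Qed.

Lemma connect_arrows v u : connect Erel v u ->
  v = u \/ exists a s, [/\ tl a = v, path (@arrel Q) a s & hd (last a s) = u].
Proof.
move/connectP=> [p pp ->] {u}; elim: p v pp => [|w p IH] v /=; first by left.
case/andP=> /existsP[a /andP[/eqP ta /eqP ha]] pe; right.
case: (IH w pe) => [<-|[b [s [tb pb hb]]]].
  by exists a, [::]; split.
exists a, (b :: s); split => //=.
by rewrite pb andbT /arrel ha tb eqxx.
Qed.

Lemma no_cycle v u : Erel v u -> connect Erel u v -> False.
Proof.
move=> /existsP[a /andP[/eqP ta /eqP ha]] /connect_arrows [uv|[b [s [tb pb hb]]]].
  by have := hacyc (a:=a) (s:=[::]) isT; rewrite /= ha uv ta eqxx.
have pab : path (@arrel Q) a (b :: s) by rewrite /= /arrel ha tb eqxx pb.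
by have := hacyc pab; rewrite /= hb ta eqxx.
Qed.

Lemma path_connect_arrows a s : path (@arrel Q) a s -> connect Erel (tl a) (hd (last a s)).
Proof.
elim: s a => [|b s IH] a /=.
  by move=> _; apply: connect1; apply/existsP; exists a; rewrite !eqxx.
case/andP=> /eqP hab pb; apply: connect_trans (IH _ pb).
by apply: connect1; apply/existsP; exists a; rewrite hab !eqxx.
Qed.

Lemma path_connect_hd a s : path (@arrel Q) a s -> connect Erel (hd a) (hd (last a s)).
Proof.
case: s => [|b s] /=; first by rewrite connect0.
case/andP=> /eqP hab pb; rewrite hab; exact: path_connect_arrows.
Qed.

Lemma allpaths_mem x : x \in allpaths Q ->
  x.2 = [::] \/ exists a s, [/\ x.2 = a :: s, x.1 = tl a & path (@arrel Q) a s].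
Proof.
rewrite mem_cat => /orP[/mapP[v _ ->]|]; first by left.
move/allpairsPdep=> [a [s [_ ]]]; rewrite mem_filter => /andP[ps _] ->; right.
by exists a, s.
Qed.

Lemma Path_triv (r : Path Q) : (val r).2 = [::] -> pend r = pstart r.
Proof. by rewrite /pend /pstart => ->. Qed.

Lemma Path_connect (r : Path Q) : connect Erel (pstart r) (pend r).
Proof.
case: (allpaths_mem (valP r)) => [/Path_triv ->|[a [s [e1 e2 ps]]]]; first exact: connect0.
rewrite /pend /pstart e1 e2 /= last_map.
exact: path_connect_arrows.
Qed.

Lemma Path_noback (r : Path Q) : (val r).2 != [::] -> ~ connect Erel (pend r) (pstart r).
Proof.
case: (allpaths_mem (valP r)) => [->//|[a [s [e1 e2 ps]]]] _ hc.
have ea : Erel (tl a) (hd a) by apply/existsP; exists a; rewrite !eqxx.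
apply: (no_cycle ea); apply: connect_trans _ (_ : connect Erel (pend r) (tl a)).
  rewrite /pend e1 /= last_map; exact: path_connect_hd.
by rewrite /pstart e2 in hc.
Qed.

Lemma ob_iter n v : ob (iter n s0 v) = ob v.
Proof. by rewrite /ob -permX porbit_perm. Qed.
Lemma ob_s0 v : ob (s0 v) = ob v.
Proof. exact: (ob_iter 1). Qed.

Lemma ob_memP u v : u \in ob v -> exists n, u = iter n s0 v.
Proof. by move/porbitP=> [n ->]; exists n; rewrite permX. Qed.

Lemma no_orbit_arrow a : ob (hd a) != ob (tl a).
Proof.
apply/negP; rewrite /ob eq_porbit_mem => /ob_memP[n hn].
set v := tl a in hn.
have c1 : connect Erel v (iter n s0 v).
  by rewrite -hn; apply: connect1; apply/existsP; exists a; rewrite !eqxx.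
have ck : forall k, connect Erel v (iter (k * n) s0 v).
  elim=> [|k IH]; first by rewrite connect0.
  apply: connect_trans IH _.
  by rewrite mulSnr iterD; apply: connect_iter.
have ea : Erel v (hd a) by apply/existsP; exists a; rewrite !eqxx.
apply: (no_cycle ea); rewrite hn.
have := connect_iter n (ck (#[s0]%g).-1).
rewrite -iterD -mulSn prednK ?order_gt0 // -[iter (_ * n) _ _]permX expgnA expg_order expg1n perm1.
by [].
Qed.

Lemma tl_pow n a : tl ((s1 ^+ n)%g a) = (s0 ^+ n)%g (tl a).
Proof. by rewrite !permX tl_iter. Qed.
Lemma hd_pow n a : hd ((s1 ^+ n)%g a) = (s0 ^+ n)%g (hd a).
Proof. by rewrite !permX hd_iter. Qed.

Lemma torb_porbit a : torb (porbit s1 a) = ob (tl a).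
Proof.
apply/setP=> u; apply/imsetP/idP.
  by move=> [b /porbitP[n ->] ->]; rewrite tl_pow mem_porbit.
by move/porbitP=> [n ->]; exists ((s1 ^+ n)%g a); rewrite ?mem_porbit // tl_pow.
Qed.
Lemma horb_porbit a : horb (porbit s1 a) = ob (hd a).
Proof.
apply/setP=> u; apply/imsetP/idP.
  by move=> [b /porbitP[n ->] ->]; rewrite hd_pow mem_porbit.
by move/porbitP=> [n ->]; exists ((s1 ^+ n)%g a); rewrite ?mem_porbit // hd_pow.
Qed.

Definition reach v := [set u | connect Erel v u].

Lemma reach_iter n v : #|reach v| <= #|reach (iter n s0 v)|.
Proof.
rewrite -(card_imset (reach v) (@perm_inj _ (s0 ^+ n)%g)).
apply: subset_leq_card; apply/subsetP=> y /imsetP[u]; rewrite !inE => cu ->.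
by rewrite !permX; apply: connect_iter.
Qed.

Lemma choose_sink (S : {set Q0 Q}) w0 :
  w0 \in S -> (forall v, v \in S -> forall u, ob u = ob v -> u \in S) ->
  exists2 w, w \in S & forall r : Path Q, ob (pstart r) = ob w -> pend r \in S ->
    ob (pend r) = ob w.
Proof.
move=> w0S Sinv.
case: (arg_minnP (fun v => #|reach v|) w0S) => w wS wmin.
exists w => // r hr hS; apply/eqP; apply/negPn/negP => hne.
set v := pstart r in hr; set u := pend r in hS hne.
have vS : v \in S by apply: Sinv wS _ hr.
have hv : #|reach v| = #|reach w|.
  apply/eqP; rewrite eqn_leq wmin // andbT.
  have : w \in ob v by rewrite -eq_porbit_mem -/(ob w) -/(ob v) hr.
  by move/ob_memP=> [n ->]; apply: reach_iter.
have nt : (val r).2 != [::].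
  apply/negP => /eqP /Path_triv; rewrite -/u -/v => euv.
  by rewrite euv hr eqxx in hne.
have : reach u \proper reach v.
  apply/properP; split.
    apply/subsetP=> z; rewrite !inE; apply: connect_trans; exact: Path_connect.
  exists v; first by rewrite inE connect0.
  by rewrite inE; apply/negP; apply: Path_noback.
move/proper_card; rewrite hv ltnNge wmin //.
Qed.

End Comb.
Section Alg.
Variables (Q : quiver) (s0 : {perm Q0 Q}) (s1 : {perm Q1 Q}).
Hypothesis haut : quiver_aut s0 s1.
Variables (k L : finFieldType).
Local Open Scope ring_scope.
Local Notation AA := (@Aalg Q s0 s1 k L).

Lemma triv_mem (v : Q0 Q) : (v, [::]) \in allpaths Q.
Proof. by rewrite mem_cat; apply/orP; left; apply/mapP; exists v; rewrite ?mem_enum. Qed.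
Definition triv (v : Q0 Q) : Path Q := SeqSub (triv_mem v).

Lemma triv_eq (p : Path Q) : (val p).2 = [::] -> p = triv (pstart p).
Proof. by case: p => [[a b] hp] /= e; apply: val_inj; rewrite /= /pstart /= e. Qed.

Lemma path_eqE (q r : Path Q) : ssval q = ssval r -> q = r.
Proof. exact: val_inj. Qed.
Lemma pair_eta (q : Path Q) : (pstart q, (ssval q).2) = ssval q.
Proof. by case: q => [[x y] ?]. Qed.

Definition EJ (J : {set {set Q0 Q}}) : PA Q L :=
  [ffun p : Path Q => (((val p).2 == [::]) && (ob s0 (pstart p) \in J))%:R].
Definition resS (a : PA Q L) (J : {set {set Q0 Q}}) : PA Q L :=
  [ffun p : Path Q => a p * (ob s0 (pstart p) \in J)%:R].
Definition resE (J : {set {set Q0 Q}}) (a : PA Q L) : PA Q L :=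
  [ffun p : Path Q => (ob s0 (pend p) \in J)%:R * a p].

Lemma natb_mul (b1 b2 : bool) : (b1%:R * b2%:R : L) = (b1 && b2)%:R.
Proof. by case: b1; case: b2; rewrite ?mulr1 ?mulr0 ?mul0r. Qed.

Lemma mulPA_E a J : mulPA a (EJ J) = resS a J.
Proof.
apply/ffunP => r; rewrite /EJ /resS !ffunE (bigD1 r) //= [X in _ + X]big1 ?addr0; last first.
  move=> p npr; apply: big1 => q /andP[/eqP c1 /eqP c2]; rewrite ffunE.
  case: (boolP ((val q).2 == [::])) => [/eqP q0|]; last by rewrite mulr0.
  exfalso; move/negP: npr; apply; apply/eqP/val_inj.
  by move: c1 c2; rewrite /pend /pstart q0 /=; case: (val p) => x y /= -> <-.
rewrite (bigD1 (triv (pstart r))) /=; last first.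
  by rewrite /pend /pstart /=; apply/andP; split; apply/eqP => //; case: (ssval r).
rewrite ?ffunE /= ?eqxx /= big1 ?addr0 // => q /andP[/andP[/eqP c1 /eqP c2] nq].
rewrite ?ffunE; case: (boolP ((val q).2 == [::])) => [/eqP q0|]; last by rewrite mulr0.
exfalso; move/negP: nq; apply; apply/eqP/val_inj => /=.
move: c1 c2; rewrite /pend /pstart q0 /=.
by case: q q0 => [[x y] hq] /= -> <- _.
Qed.

Lemma mulPA_E_l J a : mulPA (EJ J) a = resE J a.
Proof.
apply/ffunP => r; rewrite /EJ /resE !ffunE (bigD1 (triv (pend r))) //= [X in _ + X]big1 ?addr0; last first.
  move=> p npr; apply: big1 => q /andP[/eqP c1 /eqP c2]; rewrite ffunE.
  case: (boolP ((val p).2 == [::])) => [/eqP p0|]; last by rewrite mul0r.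
  exfalso; move/negP: npr; apply; apply/eqP.
  have eqr : q = r by apply: path_eqE; rewrite -c2 p0 cats0 pair_eta.
  by rewrite (triv_eq p0) -c1 eqr.
rewrite (bigD1 r) /=; last by rewrite cats0 pair_eta !eqxx.
rewrite ?ffunE /= ?eqxx /= big1 ?addr0 // => q /andP[/andP[/eqP c1 /eqP c2] nq].
exfalso; move/negP: nq; apply; apply/eqP/path_eqE.
by rewrite -c2 cats0 pair_eta.
Qed.

Lemma spath_start (p p' : Path Q) : spath s0 s1 (val p') = val p -> pstart p = s0 (pstart p').
Proof. by rewrite /pstart => <-. Qed.

Lemma spath_end (p p' : Path Q) : spath s0 s1 (val p') = val p -> pend p = s0 (pend p').
Proof.
rewrite /pend => <- /=; rewrite -map_comp.
rewrite (@eq_map _ _ ((@hd Q) \o s1) (s0 \o (@hd Q))); last by move=> a /=; rewrite (hd_s1 haut).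
by rewrite map_comp last_map.
Qed.

Lemma natb_exp (b : bool) : ((b%:R : L) ^+ #|k|) = b%:R.
Proof.
have q0 : #|k| != 0%N by rewrite -lt0n; apply/card_gt0P; exists 0.
by case: b; rewrite ?expr1n // expr0n (negbTE q0).
Qed.

Lemma Frob_resS a J : a \in AA -> resS a J \in AA.
Proof.
rewrite /in_mem /= /Aalg => /eqP ha; apply/eqP/ffunP => p; rewrite !ffunE.
under eq_bigr => p' /eqP hp' do
  rewrite ffunE exprMn natb_exp -[ob s0 (pstart p')]ob_s0 -(spath_start hp').
by rewrite -big_distrl /= -{2}ha ffunE.
Qed.

Lemma Frob_resE a J : a \in AA -> resE J a \in AA.
Proof.
rewrite /in_mem /= /Aalg => /eqP ha; apply/eqP/ffunP => p; rewrite !ffunE.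
under eq_bigr => p' /eqP hp' do
  rewrite ffunE exprMn natb_exp -[ob s0 (pend p')]ob_s0 -(spath_end hp').
by rewrite -big_distrr /= -{2}ha ffunE.
Qed.

Lemma EJ_res J : EJ J = resS (onePA Q L) J.
Proof. by apply/ffunP => p; rewrite !ffunE natb_mul. Qed.

Lemma EJ_A J : onePA Q L \in AA -> EJ J \in AA.
Proof. by move=> h; rewrite EJ_res; apply: Frob_resS. Qed.

Lemma EJ_mul J K : mulPA (EJ J) (EJ K) = EJ (J :&: K).
Proof. by rewrite mulPA_E; apply/ffunP => p; rewrite !ffunE natb_mul inE andbA. Qed.

Lemma EJ_add (J K : {set {set Q0 Q}}) : [disjoint J & K] -> addPA (EJ J) (EJ K) = EJ (J :|: K).
Proof.
move=> dJK; apply/ffunP => p; rewrite !ffunE inE.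
case: ((val p).2 == [::]) => /=; last by rewrite addr0.
case hJ : (ob s0 (pstart p) \in J); case hK : (ob s0 (pstart p) \in K) => //=;
  rewrite ?addr0 ?add0r //.
by move: (disjointFr dJK hJ); rewrite hK.
Qed.

Lemma EJ_one : EJ (porbits s0) = onePA Q L.
Proof. by apply/ffunP => p; rewrite !ffunE imset_f ?andbT. Qed.

Lemma evec_EJ j : j \in porbits s0 -> evec L j = EJ [set j].
Proof.
move=> /imsetP[w _ ->]; apply/ffunP => p; rewrite !ffunE inE /ob eq_porbit_mem.
by [].
Qed.

End Alg.
Lemma sum_eq_le (T : finType) (A : {set T}) (a b : T -> nat) :
  (forall j, j \in A -> a j <= b j) -> \sum_(j in A) a j = \sum_(j in A) b j ->
  forall j, j \in A -> a j = b j.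
Proof.
move=> hle hs j jA; move: hs; rewrite !(big_setD1 j jA) /=.
have : \sum_(i in A :\ j) a i <= \sum_(i in A :\ j) b i.
  by apply: leq_sum => i; rewrite inE => /andP[_]; apply: hle.
have := hle j jA.
move: (a j) (b j) (\sum_(i in A :\ j) a i) (\sum_(i in A :\ j) b i) => x y X Y.
lia.
Qed.

Section RankOrth.
Local Open Scope ring_scope.
Lemma rank_orth (F : fieldType) n (P R : 'M[F]_n) :
  P *m P = P -> R *m R = R -> P *m R = 0 -> R *m P = 0 ->
  \rank (P + R)%R = (\rank P + \rank R)%N.
Proof.
move=> hP hR hPR hRP; apply/eqP; rewrite eqn_leq; apply/andP; split.
  apply: (leq_trans _ (leq_of_leqif (mxrank_adds_leqif P R))).
  by apply: mxrankS; apply: addmx_sub_adds.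
have hcap : (P :&: R)%MS = 0.
  set W := (P :&: R)%MS.
  have /submxP[D1 e1] : (W <= P)%MS by apply: capmxSl.
  have /submxP[D2 e2] : (W <= R)%MS by apply: capmxSr.
  have : W *m R = 0 by rewrite e1 -mulmxA hPR mulmx0.
  by rewrite {1}e2 -mulmxA hR -e2.
rewrite -mxrank_disjoint_sum //; apply: mxrankS; rewrite addsmx_sub; apply/andP; split.
  by rewrite -{1}hP -[P *m P](addr0) -hPR -mulmxDr submxMl.
by rewrite -{1}hR -[R *m R](add0r) -hRP -mulmxDr submxMl.
Qed.

End RankOrth.

Section Mods.
Variables (Q : quiver) (s0 : {perm Q0 Q}) (s1 : {perm Q1 Q}).
Hypothesis haut : quiver_aut s0 s1.
Variables (k L : finFieldType) (emb : {rmorphism k -> L}).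
Local Open Scope ring_scope.
Local Notation AA := (@Aalg Q s0 s1 k L).
Variables (m : nat) (M : Mod s0 s1 emb m).

Lemma rM_one : val M (onePA Q L) = 1%:M.
Proof. by case/and4P: (valP M) => /eqP. Qed.
Lemma rM_notA f : f \notin AA -> val M f = 0.
Proof. by case/and4P: (valP M) => _ /forallP /(_ f) /implyP h _ _ /h /eqP. Qed.
Lemma rM_add f g : f \in AA -> g \in AA -> val M (addPA f g) = val M f + val M g.
Proof.
case/and4P: (valP M) => _ _ /forallP /(_ f) /forallP /(_ g) /implyP h _ fA gA.
by case/andP: (h (introT andP (conj fA gA))) => /eqP.
Qed.
Lemma rM_mul f g : f \in AA -> g \in AA -> val M (mulPA f g) = val M f *m val M g.
Proof.
case/and4P: (valP M) => _ _ /forallP /(_ f) /forallP /(_ g) /implyP h _ fA gA.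
by case/andP: (h (introT andP (conj fA gA))) => _ /eqP.
Qed.

Hypothesis m_gt0 : (0 < m)%N.

Lemma onePA_A : onePA Q L \in AA.
Proof.
apply/negPn/negP => /rM_notA; rewrite rM_one => /matrixP /(_ (Ordinal m_gt0) (Ordinal m_gt0)).
by rewrite !mxE eqxx /= => /eqP; rewrite oner_eq0.
Qed.

Definition eM J := val M (EJ s0 L J).

Lemma EJA J : EJ s0 L J \in AA.
Proof. by apply: EJ_A; apply: onePA_A. Qed.

Lemma eM_mul J K : eM J *m eM K = eM (J :&: K).
Proof. by rewrite /eM -rM_mul ?EJA // EJ_mul. Qed.

Lemma eM_add (J K : {set {set Q0 Q}}) : [disjoint J & K] -> eM (J :|: K) = eM J + eM K.
Proof. by move=> d; rewrite /eM -rM_add ?EJA // EJ_add. Qed.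

Lemma eM0 : eM set0 = 0.
Proof.
have d : [disjoint (set0 : {set {set Q0 Q}}) & (set0 : {set {set Q0 Q}})].
  by rewrite disjoints_subset sub0set.
have := eM_add d; rewrite setU0 => h.
by apply: (addrI (eM set0)); rewrite addr0 -h.
Qed.

Lemma eM_one : eM (porbits s0) = 1%:M.
Proof. by rewrite /eM EJ_one rM_one. Qed.

Lemma rank_eM_sum n (J : {set {set Q0 Q}}) : #|J| = n ->
  \rank (eM J) = (\sum_(j in J) \rank (eM [set j]))%N.
Proof.
elim: n J => [|n IH] J hJ.
  by move/eqP: hJ; rewrite cards_eq0 => /eqP ->; rewrite big_set0 eM0 mxrank0.
have [j jJ] : exists j, j \in J by apply/card_gt0P; rewrite hJ.
have hJ' : #|J :\ j| = n by move: hJ; rewrite (cardsD1 j) jJ add1n => [[]].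
rewrite (big_setD1 j) //= -(IH _ hJ').
have d : [disjoint [set j] & J :\ j].
  by rewrite disjoints1 !inE eqxx.
have e0 : [set j] :&: (J :\ j) = set0 by apply/setP=> x; rewrite !inE; case: (x == j).
rewrite -[J in eM J](setD1K jJ) eM_add // rank_orth // ?eM_mul ?setIid //.
  by rewrite e0 eM0.
by rewrite setIC e0 eM0.
Qed.

End Mods.
Section Dims.
Variables (Q : quiver) (s0 : {perm Q0 Q}) (s1 : {perm Q1 Q}).
Hypothesis haut : quiver_aut s0 s1.
Variables (k L : finFieldType) (emb : {rmorphism k -> L}).
Local Open Scope ring_scope.
Local Notation AA := (@Aalg Q s0 s1 k L).
Variables (alpha : {set Q0 Q} -> nat).
Variables (n : nat) (M : Mod s0 s1 emb n).
Hypothesis tot_gt0 : (0 < n)%N.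
Hypothesis hn : n = totdim s0 alpha.
Hypothesis hdim : has_dimv M alpha.


Lemma rank_orbit j : j \in porbits s0 -> \rank (eM M [set j]) = (#|j| * alpha j)%N.
Proof.
move=> jI; symmetry.
apply: (@sum_eq_le _ (porbits s0) (fun j => #|j| * alpha j)%N (fun j => \rank (eM M [set j]))) => //.
  move=> j' jI'; have := hdim jI'; rewrite /Defs.dimv => <-.
  by rewrite mulnC /eM -evec_EJ // leq_divM.
by rewrite -(rank_eM_sum M tot_gt0 (erefl _)) (eM_one M) mxrank1 hn.
Qed.

Lemma eM_nonsupp : eM M (porbits s0 :\: supp s0 alpha) = 0.
Proof.
apply/eqP; rewrite -mxrank_eq0 (rank_eM_sum M tot_gt0 (erefl _)).
apply/eqP; apply: big1 => j; rewrite !inE => /andP[nS jI].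
by rewrite rank_orbit // (_ : alpha j = 0%N) ?muln0 //; apply/eqP; move: nS; rewrite jI /= negbK.
Qed.

Variables (i : {set Q0 Q}).
Hypothesis hi : i \in supp s0 alpha.
Hypothesis hsink : forall r : Path Q, ob s0 (pstart r) = i ->
  ob s0 (pend r) \in supp s0 alpha -> ob s0 (pend r) = i.

Lemma eM_inv f : val M f *m eM M [set i] = eM M [set i] *m val M f *m eM M [set i].
Proof.
have oA := onePA_A M tot_gt0.
case fA: (f \in AA); last by rewrite rM_notA ?fA // mul0mx mulmx0 mul0mx.
set b := resS s0 f [set i].
have bA : b \in AA by apply: Frob_resS.
have EA := EJA M tot_gt0.
have e1 : val M f *m eM M [set i] = val M b by rewrite /eM -rM_mul ?fA ?EA // mulPA_E.
have dec : b = addPA (resE s0 [set i] b) (resE s0 (porbits s0 :\: supp s0 alpha) b).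
  apply/ffunP => p; rewrite /b /resE /resS /addPA !ffunE.
  case h1: (ob s0 (pstart p) \in [set i]); last by rewrite !mulr0 addr0.
  rewrite in_set1 in h1; move/eqP: h1 => h1.
  rewrite in_setD in_set1 imset_f // andbT.
  case h2: (ob s0 (pend p) == i).
    by move/eqP: h2 => h2; rewrite h2 hi /= mul1r mul0r addr0.
  case h3: (ob s0 (pend p) \in supp s0 alpha).
    by rewrite (hsink h1 h3) eqxx in h2.
  by rewrite /= mul0r add0r mul1r.
have e2 : val M b = eM M [set i] *m val M b.
  rewrite {1}dec rM_add ?Frob_resE // -!mulPA_E_l !rM_mul ?EA //.
  by have := eM_nonsupp; rewrite /eM => ->; rewrite mul0mx addr0.
by rewrite e1 -mulmxA e1 -e2.
Qed.

End Dims.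
Section HallBasics.
Variables (Q : quiver) (s0 : {perm Q0 Q}) (s1 : {perm Q1 Q}).
Variables (k L : finFieldType) (emb : {rmorphism k -> L}).
Local Open Scope ring_scope.
Local Notation AA := (@Aalg Q s0 s1 k L).
Local Notation MOD := (Mod s0 s1 emb).

Lemma mx_eq0_cols p q (X : 'M[k]_(p, q)) : (forall v : 'cV_q, X *m v = 0) -> X = 0.
Proof.
move=> h; apply/matrixP => a b; have := h (delta_mx b 0); rewrite -colE.
by move/matrixP/(_ a 0); rewrite !mxE.
Qed.

Lemma injbP m n (f : 'M[k]_(n, m)) : reflect (forall v : 'cV[k]_m, f *m v = 0 -> v = 0) (injb f).
Proof.
apply: (iffP forallP) => h v.
  by move=> e; apply/eqP; move/implyP: (h v); apply; rewrite e.
by apply/implyP => /eqP /h ->.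
Qed.

Lemma surjbP m n (f : 'M[k]_(n, m)) : reflect (forall w : 'cV[k]_n, exists v : 'cV[k]_m, f *m v = w) (surjb f).
Proof.
apply: (iffP forallP) => h w.
  by case/existsP: (h w) => v /eqP; exists v.
by case: (h w) => v e; apply/existsP; exists v; rewrite e.
Qed.

Lemma inj_rank m n (f : 'M[k]_(n, m)) : injb f -> \rank f = m.
Proof.
move/injbP => h; rewrite -mxrank_tr; apply/eqP; apply: inj_row_free => v e.
apply: trmx_inj; rewrite trmx0; apply: h.
by apply: trmx_inj; rewrite trmx_mul trmxK e trmx0.
Qed.

Lemma homP m n (M : MOD m) (N : MOD n) (f : 'M[k]_(n, m)) :
  reflect (forall a, f *m val M a = val N a *m f) (Defs.hom M N f).
Proof. by apply: (iffP forallP) => h a; apply/eqP; apply: h. Qed.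

Lemma isobP m n (M : MOD m) (N : MOD n) :
  reflect (exists f : 'M[k]_(n, m), [/\ forall a, f *m val M a = val N a *m f,
     forall v : 'cV[k]_m, f *m v = 0 -> v = 0 & forall w : 'cV[k]_n, exists v : 'cV[k]_m, f *m v = w]) (isob M N).
Proof.
apply: (iffP existsP) => [[f /and3P[/homP h /injbP i /surjbP s]]|[f [h i s]]].
  by exists f.
by exists f; rewrite (introT (homP _ _ _) h) (introT (injbP _) i) (introT (surjbP _) s).
Qed.

Lemma isob_refl m (M : MOD m) : isob M M.
Proof.
apply/isobP; exists 1%:M; split => [a|v|w]; first by rewrite mul1mx mulmx1.
  by rewrite mul1mx.
by exists w; rewrite mul1mx.
Qed.

Lemma isob_trans m n p (M : MOD m) (N : MOD n) (R : MOD p) :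
  isob M N -> isob N R -> isob M R.
Proof.
move=> /isobP[f [hf jf sf]] /isobP[g [hg ig sg]]; apply/isobP; exists (g *m f); split.
- by move=> a; rewrite -mulmxA hf mulmxA hg mulmxA.
- by move=> v; rewrite -mulmxA => /ig /jf.
- move=> w; case: (sg w) => u <-; case: (sf u) => v <-; exists v; by rewrite mulmxA.
Qed.

Lemma isob_sym n (M N : MOD n) : isob M N -> isob N M.
Proof.
move=> isoMN; have := isoMN; move=> /isobP[f [hf jf sf]].
have fU : f \in unitmx.
  by rewrite -row_free_unit /row_free inj_rank //; apply/injbP; exact: jf.
apply/isobP; exists (invmx f); split.
- move=> a; rewrite -[LHS]mulmx1 -(mulmxV fU) !mulmxA -[invmx f *m _ *m f]mulmxA -hf.
  by rewrite mulmxA mulVmx // mul1mx.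
- by move=> v e; rewrite -(mulKVmx fU v) e mulmx0.
- by move=> w; exists (f *m w); rewrite mulKmx.
Qed.

Variable C : numClosedFieldType.

Lemma sum_classes_iso n (N0 : MOD n) :
  (\sum_(Cl in Defs.classes s0 s1 emb n)
     (if [pick M in Cl] is Some M then (isob N0 M)%:R else 0) : C) = 1.
Proof.
have cN0 : [set N | isob N0 N] \in Defs.classes s0 s1 emb n by apply: imset_f.
rewrite (bigD1 _ cN0) /= big1 ?addr0.
  case: pickP => [M|h]; first by rewrite inE => ->.
  by have := h N0; rewrite inE isob_refl.
move=> Cl /andP[/imsetP[M' _ ->] ne].
case: pickP => [M|//]; rewrite inE => hM.
case h0 : (isob N0 M) => //; exfalso; move/negP: ne; apply; apply/eqP/setP => N.
rewrite !inE; apply/idP/idP => h.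
  by apply: isob_trans h0 (isob_trans (isob_sym hM) h).
by apply: isob_trans hM (isob_trans (isob_sym h0) h).
Qed.

End HallBasics.
Section HallCount.
Variables (Q : quiver) (s0 : {perm Q0 Q}) (s1 : {perm Q1 Q}).
Variables (k L : finFieldType) (emb : {rmorphism k -> L}).
Local Open Scope ring_scope.
Local Notation AA := (@Aalg Q s0 s1 k L).
Local Notation MOD := (Mod s0 s1 emb).

Definition subrep m n (M : MOD m) (U : 'M[k]_(n, m)) (V : 'M[k]_(m, n)) :
  {ffun PA Q L -> 'M[k]_n} := [ffun a => U *m val M a *m V].

Lemma rM_scale m (M : MOD m) c f : f \in AA -> val M (scalePA emb c f) = c *: val M f.
Proof.
move=> fA; case/and4P: (valP M) => _ _ _ /forallP /(_ c) /forallP /(_ f) /implyP /(_ fA).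
by move/eqP.
Qed.

Lemma subrep_ok m n (M : MOD m) (U : 'M[k]_(n, m)) (V : 'M[k]_(m, n)) :
  U *m V = 1%:M ->
  (forall f g, U *m val M f *m val M g *m V = U *m val M f *m V *m (U *m val M g *m V)) ->
  is_modb s0 s1 emb (subrep M U V).
Proof.
move=> hUV hmul; apply/and4P; split.
- by rewrite ffunE rM_one mulmx1 hUV.
- apply/forallP => f; apply/implyP => nf; by rewrite ffunE rM_notA // mulmx0 mul0mx.
- apply/forallP => f; apply/forallP => g; apply/implyP => /andP[fA gA].
  by rewrite !ffunE rM_add // rM_mul // mulmxDr mulmxDl mulmxA hmul !eqxx.
- apply/forallP => c; apply/forallP => f; apply/implyP => fA.
  by rewrite !ffunE rM_scale // -scalemxAr -scalemxAl.
Qed.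

Lemma idem_cols m n (P : 'M[k]_m) (B : 'M[k]_(m, n)) (Bl : 'M[k]_(n, m)) (D : 'M[k]_(n, m)) :
  Bl *m B = 1%:M -> P = B *m D -> forall p (Y : 'M[k]_(m, p)), P *m Y = Y -> B *m Bl *m Y = Y.
Proof.
move=> hBl hD p Y hY; rewrite -{1}hY hD !mulmxA -[B *m Bl *m B]mulmxA hBl mulmx1.
by rewrite -hD.
Qed.

Lemma hall_count m1 m2 (M : MOD (m1 + m2)) (e : PA Q L) :
  val M e *m val M e = val M e ->
  (forall f, val M f *m val M e = val M e *m val M f *m val M e) ->
  \rank (val M e) = m2 ->
  exists Y0 : MOD m2, exists X0 : MOD m1, val Y0 e = 1%:M /\
    forall (X : MOD m1) (Y : MOD m2), val Y e = 1%:M ->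
      hallnum M X Y = (isob Y0 Y && isob X0 X).
Proof.
set m := (m1 + m2)%N; set P := val M e => hPP hinv hrk.
have hrk2 : \rank (1%:M - P) = m1.
  have h1 : (1%:M - P) *m (1%:M - P) = 1%:M - P.
    by rewrite mulmxBl mul1mx mulmxBr mulmx1 hPP subrr subr0.
  have h2 : P *m (1%:M - P) = 0 by rewrite mulmxBr mulmx1 hPP subrr.
  have h3 : (1%:M - P) *m P = 0 by rewrite mulmxBl mul1mx hPP subrr.
  have := rank_orth hPP h1 h2 h3; rewrite addrC subrK mxrank1 hrk /m => h.
  lia.
have [B [Bl [D [hBl hPB hD]]]] : exists B : 'M[k]_(m, m2), exists Bl : 'M[k]_(m2, m),
    exists D : 'M[k]_(m2, m), [/\ Bl *m B = 1%:M, P *m B = B & P = B *m D].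
  have : exists r (R : 'M[k]_(r, m)), [/\ r = m2, row_free R & (R :=: P^T)%MS].
    exists (\rank P^T), (row_base P^T); split; last exact: eq_row_base.
      by rewrite mxrank_tr.
    exact: row_base_free.
  move=> [r [R [er fR eR]]]; subst r.
  case/row_freeP: fR => Cm hCm.
  have /submxP[D1 hD1] : (R <= P^T)%MS by rewrite eR.
  have /submxP[D2 hD2] : (P^T <= R)%MS by rewrite eR.
  exists R^T, Cm^T, D2^T; split.
  - by rewrite -trmx_mul hCm trmx1.
  - by rewrite hD1 trmx_mul trmxK mulmxA hPP.
  - by rewrite -trmx_mul -hD2 trmxK.
have hBB := idem_cols hBl hD.
have invB : forall f, val M f *m B = B *m Bl *m (val M f *m B).
  move=> f.
  have ef : val M f *m B = P *m (val M f *m B) by rewrite -{1}hPB mulmxA hinv -!mulmxA hPB.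
  by rewrite hBB // -ef.
have hmY : forall f g, Bl *m val M f *m val M g *m B =
    Bl *m val M f *m B *m (Bl *m val M g *m B).
  by move=> f g; rewrite -!mulmxA {1}[val M g *m B]invB !mulmxA.
pose Y0 : MOD m2 := exist _ (subrep M Bl B) (subrep_ok hBl hmY).
set Pc := 1%:M - P.
have [G [Gr [D1 [D2 [hG hD1 hD2]]]]] : exists G : 'M[k]_(m1, m), exists Gr : 'M[k]_(m, m1),
    exists D1 : 'M[k]_(m1, m), exists D2 : 'M[k]_(m, m1),
    [/\ G *m Gr = 1%:M, G = D1 *m Pc & Pc = D2 *m G].
  have : exists r (R : 'M[k]_(r, m)), [/\ r = m1, row_free R & (R :=: Pc)%MS].
    exists (\rank Pc), (row_base Pc); split => //; [exact: row_base_free | exact: eq_row_base].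
  move=> [r [R [er fR eR]]]; subst r.
  case/row_freeP: fR => Cm hCm.
  have /submxP[E1 hE1] : (R <= Pc)%MS by rewrite eR.
  have /submxP[E2 hE2] : (Pc <= R)%MS by rewrite eR.
  by exists R, Cm, E1, E2.
have hGP : G *m P = 0 by rewrite hD1 -mulmxA mulmxBl mul1mx hPP subrr mulmx0.
have hGG : forall p (Y : 'M[k]_(m, p)), G *m Y = 0 -> Y = P *m Y.
  move=> p Y hY; apply/eqP; rewrite -subr_eq0 -{1}[Y]mul1mx -mulmxBl -/Pc hD2 -mulmxA hY.
  by rewrite mulmx0.
have hY1 : G *m (1%:M - Gr *m G) = 0 by rewrite mulmxBr mulmx1 mulmxA hG mul1mx subrr.
have invG : forall f, G *m val M f = G *m val M f *m Gr *m G.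
  move=> f; have eY := hGG _ _ hY1.
  have : G *m val M f *m (1%:M - Gr *m G) = 0.
    rewrite eY mulmxA -[G *m val M f *m P]mulmxA hinv !mulmxA hGP.
    by rewrite !mul0mx.
  by rewrite mulmxBr mulmx1 mulmxA => /eqP; rewrite subr_eq0 => /eqP.
have hmX : forall f g, G *m val M f *m val M g *m Gr =
    G *m val M f *m Gr *m (G *m val M g *m Gr).
  by move=> f g; rewrite {1}invG !mulmxA.
pose X0 : MOD m1 := exist _ (subrep M G Gr) (subrep_ok hG hmX).
set Z0 := [set P *m v | v : 'cV[k]_m].
have kerG : [set v | G *m v == 0] = Z0.
  apply/setP => v; rewrite inE; apply/eqP/imsetP.
    by move=> h; exists v => //; exact: (hGG _ v h).
  by move=> [w _ ->]; rewrite mulmxA hGP mul0mx.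
have imB : [set B *m v | v : 'cV[k]_m2] = Z0.
  apply/setP => z; apply/imsetP/imsetP => [[v _ ->]|[w _ ->]].
    by exists (B *m v) => //; rewrite mulmxA hPB.
  by exists (D *m w) => //; rewrite hD mulmxA.
exists Y0, X0; split.
  by rewrite /= ffunE -/P -mulmxA hPB hBl.
move=> X Y hYe.
have imf : forall f : 'M[k]_(m, m2), Defs.hom Y M f -> injb f ->
    [set f *m v | v : 'cV[k]_m2] = Z0.
  move=> f /homP hf jf.
  have hPf : P *m f = f by have := hf e; rewrite hYe mulmx1.
  have rf : \rank f = m2 := inj_rank jf.
  have s1' : (f^T <= P^T)%MS by rewrite -{1}hPf trmx_mul submxMl.
  have s2 : (P^T <= f^T)%MS.
    by have := mxrank_leqif_sup s1'; case=> _ <-; rewrite !mxrank_tr rf hrk.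
  case/submxP: s2 => D3 hD3.
  have hP3 : P = f *m D3^T by rewrite -[P]trmxK hD3 trmx_mul trmxK.
  apply/setP => z; apply/imsetP/imsetP => [[v _ ->]|[w _ ->]].
    by exists (f *m v) => //; rewrite mulmxA hPf.
  by exists (D3^T *m w) => //; rewrite hP3 mulmxA.
have hYc : forall Z : {set 'cV[k]_m},
    [exists f : 'M[k]_(m, m2), [&& Defs.hom Y M f, injb f & Z == [set f *m v | v : 'cV[k]_m2]]]
    = (Z == Z0) && isob Y0 Y.
  move=> Z; apply/existsP/andP.
    move=> [f /and3P[hf jf /eqP ->]]; split; first by rewrite (imf f hf jf).
    apply: isob_sym; move/homP: hf => hf.
    have hPf : P *m f = f by have := hf e; rewrite hYe mulmx1.
    have hBf : B *m Bl *m f = f := hBB _ f hPf.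
    apply/isobP; exists (Bl *m f); split.
    - by move=> a; rewrite /= ffunE -mulmxA hf -{1}hBf !mulmxA.
    - move=> v hv; apply: (elimT (injbP _) jf).
      by rewrite -hBf -mulmxA -mulmxA (mulmxA Bl) hv mulmx0.
    - move=> w; have : B *m w \in [set f *m v | v : 'cV[k]_m2].
        by rewrite (imf f (introT (homP _ _ _) hf) jf) -imB; apply: imset_f.
      by move/imsetP=> [v _ hv]; exists v; rewrite -mulmxA -hv mulmxA hBl mul1mx.
  move=> [/eqP -> /isob_sym /isobP[h [hh jh sh]]]; exists (B *m h); apply/and3P; split.
  - apply/homP => a; rewrite -mulmxA hh /= ffunE !mulmxA.
    by rewrite -(mulmxA (B *m Bl)) -invB.
  - apply/injbP => v hv; apply: jh.
    by rewrite -[h *m v]mul1mx -hBl -mulmxA (mulmxA B) hv mulmx0.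
  - rewrite -imB eq_sym; apply/eqP/setP => z.
    apply/imsetP/imsetP => [[v _ ->]|[w _ ->]].
      by exists (h *m v) => //; rewrite mulmxA.
    by case: (sh w) => v <-; exists v => //; rewrite mulmxA.
have hXc : [exists g : 'M[k]_(m1, m), [&& Defs.hom M X g, surjb g & Z0 == [set v | g *m v == 0]]]
    = isob X0 X.
  apply/existsP/idP.
    move=> [g /and3P[/homP hg /surjbP sg /eqP hk]].
    have hgG : g *m (1%:M - Gr *m G) = 0.
      apply: mx_eq0_cols => v.
      have : (1%:M - Gr *m G) *m v \in [set v | G *m v == 0] by rewrite inE mulmxA hY1 mul0mx.
      by rewrite kerG hk inE mulmxA => /eqP.
    have hgg : g = g *m Gr *m G.
      by apply/eqP; rewrite -subr_eq0 -{1}[g]mulmx1 -mulmxA -mulmxBr hgG.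
    apply/isobP; exists (g *m Gr); split.
    - by move=> a; rewrite /= ffunE !mulmxA -hgg hg.
    - move=> v hv; have : Gr *m v \in [set v | g *m v == 0] by rewrite inE mulmxA hv.
      by rewrite -hk -kerG inE mulmxA hG mul1mx => /eqP.
    - by move=> w; case: (sg w) => u <-; exists (G *m u); rewrite mulmxA -hgg.
  move=> /isobP[h [hh jh sh]]; exists (h *m G); apply/and3P; split.
  - apply/homP => a; have := hh a; rewrite /= ffunE => hha.
    by rewrite -mulmxA invG mulmxA hha -mulmxA.
  - apply/surjbP => w; case: (sh w) => u <-; exists (Gr *m u).
    by rewrite -mulmxA (mulmxA G) hG mul1mx.
  - rewrite -kerG; apply/eqP/setP => v; rewrite !inE; apply/idP/idP => /eqP hv; apply/eqP.
      by rewrite -mulmxA hv mulmx0.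
    by apply: jh; rewrite mulmxA.
rewrite /hallnum.
have -> : [set Z : {set 'cV[k]_m} |
      [exists f : 'M[k]_(m, m2), [&& Defs.hom Y M f, injb f & Z == [set f *m v | v : 'cV[k]_m2]]] &&
      [exists g : 'M[k]_(m1, m), [&& Defs.hom M X g, surjb g & Z == [set v | g *m v == 0]]]]
    = if isob Y0 Y && isob X0 X then [set Z0] else set0.
  apply/setP => Z; rewrite inE hYc; case: (Z =P Z0) => [->|ne] /=; last first.
    by case: ifP => _; rewrite !inE //; move/eqP/negbTE: ne => ->.
  by rewrite hXc; case: ifP => _; rewrite ?inE ?eqxx.
by case: ifP; rewrite ?cards1 ?cards0.
Qed.

End HallCount.
Section SumCls.
Variables (Q : quiver) (s0 : {perm Q0 Q}) (s1 : {perm Q1 Q}).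
Variables (k L : finFieldType) (emb : {rmorphism k -> L}).
Variable C : numClosedFieldType.
Local Open Scope ring_scope.
Local Notation MOD := (Mod s0 s1 emb).

Lemma sum_cls_ext n (F G : MOD n -> C) : (forall M, F M = G M) ->
  sum_cls F = sum_cls G.
Proof. by move=> h; apply: eq_bigr => Cl _; case: pickP => // M _; rewrite h. Qed.

Lemma sum_cls0 n (F : MOD n -> C) : (forall M, F M = 0) -> sum_cls F = 0.
Proof. by move=> h; apply: big1 => Cl _; case: pickP => // M _; rewrite h. Qed.

Lemma sum_clsM n c (F : MOD n -> C) : sum_cls (fun M => c * F M) = c * sum_cls F.
Proof.
rewrite /sum_cls mulr_sumr; apply: eq_bigr => Cl _.
by case: pickP => [//|_]; rewrite mulr0.
Qed.

Lemma sum_cls_swap n p (H : MOD n -> MOD p -> C) :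
  sum_cls (fun M => sum_cls (fun N => H M N)) = sum_cls (fun N => sum_cls (fun M => H M N)).
Proof.
rewrite /sum_cls.
pose h (Cl : {set MOD n}) (Cl' : {set MOD p}) := if [pick M in Cl] is Some M then
  (if [pick N in Cl'] is Some N then H M N else 0) else 0.
transitivity (\sum_(Cl in Defs.classes s0 s1 emb n) \sum_(Cl' in Defs.classes s0 s1 emb p) h Cl Cl').
  apply: eq_bigr => Cl _; rewrite /h; case: pickP => [M _|_]; last by rewrite big1.
  by [].
rewrite exchange_big /=; apply: eq_bigr => Cl' _; rewrite /h.
case: pickP => [N _|_]; last by rewrite big1 // => Cl _; case: pickP.
by apply: eq_bigr => Cl _; case: pickP.
Qed.

Lemma sum_cls_iso n (N0 : MOD n) : sum_cls (fun N : MOD n => ((isob N0 N)%:R : C)) = 1.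
Proof. exact: sum_classes_iso. Qed.

End SumCls.
Section Final1.
Variables (Q : quiver) (s0 : {perm Q0 Q}) (s1 : {perm Q1 Q}).
Variables (k L : finFieldType) (emb : {rmorphism k -> L}).
Variable C : numClosedFieldType.
Local Open Scope ring_scope.
Local Notation MOD := (Mod s0 s1 emb).

Lemma mx_dim0 p (A B : 'M[k]_(0, p)) : A = B.
Proof. by apply/matrixP => i; case: i. Qed.

Lemma mod0_eq (M N : MOD 0) : M = N.
Proof. by apply: val_inj; apply/ffunP => a; apply: mx_dim0. Qed.

Lemma sum_cls_mod0 (M : MOD 0) (F : MOD 0 -> C) : sum_cls F = F M.
Proof.
rewrite /sum_cls.
have -> : Defs.classes s0 s1 emb 0 = [set [set N | isob M N]].
  apply/setP => Cl; rewrite inE; apply/imsetP/eqP => [[M' _ ->]|->].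
    by rewrite (mod0_eq M' M).
  by exists M.
rewrite big_set1; case: pickP => [N _|h]; first by rewrite (mod0_eq N M).
by have := h M; rewrite inE isob_refl.
Qed.

Lemma aut_mod0 (M : MOD 0) : aut M = 1%N.
Proof.
rewrite /aut (_ : [set f : 'M[k]_0 | _] = [set 1%:M]) ?cards1 //.
apply/setP => f; rewrite !inE (mx_dim0 f 1%:M) eqxx.
apply/and3P; split.
- by apply/homP => a; rewrite mul1mx mulmx1.
- by apply/injbP => v; rewrite mul1mx.
- by apply/surjbP => w; exists w; rewrite mul1mx.
Qed.

Lemma hall_mod0 (M : MOD 0) : hallnum M M M = 1%N.
Proof.
rewrite /hallnum (_ : [set Z : {set 'cV[k]_0} | _] = [set setT]) ?cards1 //.
apply/setP => Z; rewrite !inE; apply/andP/eqP.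
  move=> [/existsP[f /and3P[_ _ /eqP ->]] _]; apply/setP => z; rewrite inE.
  by apply/imsetP; exists z => //; apply: mx_dim0.
move=> ->; split.
  apply/existsP; exists 1%:M; apply/and3P; split.
  - by apply/homP => a; rewrite mul1mx mulmx1.
  - by apply/injbP => v; rewrite mul1mx.
  - apply/eqP/setP => z; rewrite inE; apply/esym/imsetP; exists z => //.
    by apply: mx_dim0.
apply/existsP; exists 1%:M; apply/and3P; split.
- by apply/homP => a; rewrite mul1mx mulmx1.
- by apply/surjbP => w; exists w; rewrite mul1mx.
- by apply/eqP/setP => z; rewrite !inE (mx_dim0 z 0) mul1mx eqxx.
Qed.

Lemma dimv_mod0 (M : MOD 0) i : Defs.dimv M i = 0%N.
Proof.
rewrite /Defs.dimv; have := rank_leq_row (val M (evec L i)).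
by rewrite leqn0 => /eqP ->; rewrite div0n.
Qed.

Lemma euler_mod0 (M : MOD 0) : euler s0 s1 (Defs.dimv M) (Defs.dimv M) = 0.
Proof.
rewrite /euler !big1 ?subr0 // => j _; by rewrite !dimv_mod0 ?muln0.
Qed.

Lemma isob_unit n (Y0 Y : MOD n) (e : PA Q L) :
  val Y0 e = 1%:M -> isob Y0 Y -> val Y e = 1%:M.
Proof.
move=> h0 /isobP[h [hh jh sh]].
have hU : h \in unitmx by rewrite -row_free_unit /row_free inj_rank //; apply/injbP.
have := hh e; rewrite h0 mulmx1 => he.
by rewrite -[val Y e]mulmx1 -(mulmxV hU) mulmxA -he mulmxV.
Qed.

End Final1.

Local Open Scope ring_scope.
Lemma aut_gt0 Q' (t0 : {perm Q0 Q'}) (t1 : {perm Q1 Q'}) (k' L' : finFieldType)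
  (emb' : {rmorphism k' -> L'}) n (M : Mod t0 t1 emb' n) : (0 < aut M)%N.
Proof.
apply/card_gt0P; exists 1%:M; rewrite inE; apply/and3P; split.
- by apply/homP => a; rewrite mul1mx mulmx1.
- by apply/injbP => v; rewrite mul1mx.
- by apply/surjbP => w; exists w; rewrite mul1mx.
Qed.
Section Euler1.
Variables (Q : quiver) (s0 : {perm Q0 Q}) (s1 : {perm Q1 Q}).
Hypothesis haut : quiver_aut s0 s1.
Hypothesis hacyc : acyclic Q.
Local Open Scope ring_scope.

Lemma symeuler_pos (alpha : {set Q0 Q} -> nat) i : i \in supp s0 alpha ->
  (forall j, j \in supp s0 alpha -> j = i) -> 0 < symeuler s0 s1 alpha (unitv i).
Proof.
move=> iS hsing.
have iI : i \in Iset s0 by move: iS; rewrite inE => /andP[].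
have ai : alpha i != 0%N by move: iS; rewrite inE => /andP[].
have zero_out : forall j, j \in Iset s0 -> j != i -> alpha j = 0%N.
  move=> j jI ne; apply/eqP; apply/negPn/negP => nz; move/negP: ne; apply; apply/eqP.
  by apply: hsing; rewrite inE jI nz.
have obI : forall v, ob s0 v \in Iset s0 by move=> v; rewrite /Iset /porbits; apply: imset_f.
have e1 : euler s0 s1 alpha (unitv i) = (#|i| * alpha i)%:Z.
  rewrite /euler (big_setD1 i iI) /= big1 ?addr0; last first.
    by move=> j; rewrite !inE => /andP[ne _]; rewrite /unitv (negbTE ne) muln0.
  rewrite big1 ?subr0 /unitv ?eqxx ?muln1 //.
  move=> r /imsetP[a _ ->]; rewrite (torb_porbit haut) (horb_porbit haut).
  case: eqP => [h|_]; last by rewrite muln0.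
  rewrite (zero_out (ob s0 (tl a))) ?muln0 ?mul0n //.
  by rewrite -h eq_sym; exact: (no_orbit_arrow haut hacyc a).
have e2 : euler s0 s1 (unitv i) alpha = (#|i| * alpha i)%:Z.
  rewrite /euler (big_setD1 i iI) /= big1 ?addr0; last first.
    by move=> j; rewrite !inE => /andP[ne _]; rewrite /unitv (negbTE ne) muln0 mul0n.
  rewrite big1 ?subr0 /unitv ?eqxx ?muln1 //.
  move=> r /imsetP[a _ ->]; rewrite (torb_porbit haut) (horb_porbit haut).
  case: eqP => [h|_]; last by rewrite muln0 mul0n.
  rewrite (zero_out (ob s0 (hd a))) ?muln0 ?mul0n //.
  by rewrite -h; exact: (no_orbit_arrow haut hacyc a).
rewrite /symeuler e1 e2 -PoszD ltz_nat addn_gt0 muln_gt0 [(0 < alpha i)%N]lt0n ai andbT orbb.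
by case/imsetP: iI => v _ ->; rewrite lt0n card_porbit_neq0.
Qed.

End Euler1.
Lemma factor_lemma (C : numClosedFieldType) (x a b c d h : C) :
  x * a * b * c / d * h = (a * b * c) * (x / d * h).
Proof. ring. Qed.

Local Open Scope ring_scope.

Theorem proposition2p3
  (Q : quiver) (s0 : {perm Q0 Q}) (s1 : {perm Q1 Q})
  (k L : finFieldType) (emb : {rmorphism k -> L}) (e : nat)
  (C : numClosedFieldType)
  (alpha : {set Q0 Q} -> nat)
  (x : forall m, Mod s0 s1 emb m -> C) :
  acyclic Q ->
  quiver_aut s0 s1 ->
  #|L| = (#|k| ^ e)%N -> (s0 ^+ e)%g = 1%g -> (s1 ^+ e)%g = 1%g ->
  in_fundamental s0 s1 alpha ->
  homogeneous x alpha ->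
  primitive x ->
  Iform x alpha = 0.
Proof.
move=> hacyc haut _ _ _ [_ hfund] [hall hhom] hprim.
have xz : forall n (M : Mod s0 s1 emb n), ~~ has_dimvb M alpha -> x n M = 0.
  move=> n M nh; apply/eqP; apply/negPn/negP => nz; move/negP: nh; apply.
  apply/forallP => j; apply/implyP => jI; apply/eqP; exact: (hhom n M nz j jI).
have -> : Iform x alpha =
    sum_cls (fun M : Mod s0 s1 emb (totdim s0 alpha) => x _ M / (aut M)%:R).
  apply: sum_cls_ext => M; case: ifP => // /negbT /xz ->; by rewrite mul0r.
case: (posnP (totdim s0 alpha)) => [htot|tpos].
  have x0 : forall M : Mod s0 s1 emb 0, x 0 M = 0.
    move=> M; have := hprim 0%N 0%N M M; rewrite /coprod_coef (sum_cls_mod0 M) /=.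
    rewrite (aut_mod0 M) hall_mod0 euler_mod0 expr0z ?mulr1n ?mulr1 ?invr1 ?mulr1 => h.
    by apply: (addrI (x 0%N M)); rewrite addr0 -{1}h.
  move: htot; move: (totdim s0 alpha) => n hn; subst n.
  by apply: sum_cls0 => M; rewrite x0 mul0r.
have [j0 j0I j0a] : exists2 j, j \in Iset s0 & alpha j != 0%N.
  case: (boolP [exists j in Iset s0, alpha j != 0%N]) => [/exists_inP//|hn].
  exfalso; move: tpos; rewrite /totdim big1 ?ltnn // => j jI.
  move: hn; rewrite negb_exists_in => /forall_inP /(_ j jI); rewrite negbK => /eqP ->.
  by rewrite muln0.
case/imsetP: (j0I) => w0 _ hw0.
set S := [set v | ob s0 v \in supp s0 alpha].
have w0S : w0 \in S by rewrite inE /ob -hw0 inE j0I j0a.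
have Scl : forall v, v \in S -> forall u, ob s0 u = ob s0 v -> u \in S.
  by move=> v vS u huv; rewrite inE huv; move: vS; rewrite inE.
have [w wS hsw] := choose_sink haut hacyc w0S Scl.
have iS : ob s0 w \in supp s0 alpha by move: wS; rewrite inE.
move: iS hsw; set i := ob s0 w => iS hsw.
have hsink : forall r : Path Q, ob s0 (pstart r) = i ->
    ob s0 (pend r) \in supp s0 alpha -> ob s0 (pend r) = i.
  by move=> r h1 h2; apply: hsw => //; rewrite inE.
have iI : i \in Iset s0 by move: iS; rewrite inE => /andP[].
have ai : alpha i != 0%N by move: iS; rewrite inE => /andP[].
have [j jS ji] : exists2 j, j \in supp s0 alpha & j != i.
  case: (boolP [exists j in supp s0 alpha, j != i]) => [/exists_inP//|hn].
  exfalso; have hs : forall j, j \in supp s0 alpha -> j = i.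
    move=> j jS; move: hn; rewrite negb_exists_in => /forall_inP /(_ j jS).
    by rewrite negbK => /eqP.
  by have := hfund i iI; rewrite leNgt (symeuler_pos haut hacyc iS hs).
have jI : j \in Iset s0 by move: jS; rewrite inE => /andP[].
have aj : alpha j != 0%N by move: jS; rewrite inE => /andP[].
have cpos : forall l, l \in Iset s0 -> (0 < #|l|)%N.
  by move=> l /imsetP[v _ ->]; rewrite lt0n card_porbit_neq0.
have [m1 [m2 [hm m1p m2p hm2]]] : exists m1 m2,
    [/\ (m1 + m2)%N = totdim s0 alpha, (0 < m1)%N, (0 < m2)%N & m2 = (#|i| * alpha i)%N].
  exists (\sum_(l in Iset s0 :\ i) #|l| * alpha l)%N, (#|i| * alpha i)%N; split => //.
  - by rewrite /totdim (big_setD1 i iI) addnC.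
  - rewrite (big_setD1 j) /=; last by rewrite !inE ji jI.
    by rewrite addn_gt0 muln_gt0 cpos // lt0n aj.
  - by rewrite muln_gt0 cpos // lt0n ai.
rewrite -hm.
have T1 : forall M : Mod s0 s1 emb (m1 + m2), x _ M != 0 ->
    sum_cls (fun X : Mod s0 s1 emb m1 => sum_cls (fun Y : Mod s0 s1 emb m2 =>
      if val Y (evec L i) == 1%:M then ((hallnum M X Y)%:R : C) else 0)) = 1.
  move=> M nz; have hd := hhom _ M nz.
  have npos : (0 < m1 + m2)%N by rewrite addn_gt0 m1p.
  have hevec : val M (evec L i) = eM M [set i] by rewrite /eM (evec_EJ L iI).
  have hPP : val M (evec L i) *m val M (evec L i) = val M (evec L i).
    by rewrite hevec eM_mul // setIid.
  have hinv : forall f, val M f *m val M (evec L i) =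
      val M (evec L i) *m val M f *m val M (evec L i).
    by move=> f; rewrite hevec; apply: (eM_inv haut npos hm hd iS hsink).
  have hrk : \rank (val M (evec L i)) = m2.
    by rewrite hevec (rank_orbit npos hm hd iI) hm2.
  have [Y0 [X0 [hY0 hc]]] := hall_count hPP hinv hrk.
  transitivity (sum_cls (fun X : Mod s0 s1 emb m1 => (isob X0 X)%:R *
      sum_cls (fun Y : Mod s0 s1 emb m2 => ((isob Y0 Y)%:R : C)))).
    apply: sum_cls_ext => X; rewrite -sum_clsM; apply: sum_cls_ext => Y.
    case: (boolP (isob Y0 Y)) => iso.
      by rewrite (isob_unit hY0 iso) eqxx hc ?(isob_unit hY0 iso) // iso /= mulr1.
    case: eqP => [hYe|_]; last by rewrite mulr0.
    by rewrite hc // (negbTE iso) mulr0.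
  transitivity (sum_cls (fun X : Mod s0 s1 emb m1 => ((isob X0 X)%:R : C))).
    by apply: sum_cls_ext => X; rewrite sum_cls_iso mulr1.
  exact: sum_cls_iso.
have G0 : forall (X : Mod s0 s1 emb m1) (Y : Mod s0 s1 emb m2),
    sum_cls (fun M : Mod s0 s1 emb (m1 + m2) => x _ M / (aut M)%:R * (hallnum M X Y)%:R) = 0.
  move=> X Y; have := hprim m1 m2 X Y.
  rewrite (negbTE (lt0n_neq0 m2p)) (negbTE (lt0n_neq0 m1p)) addr0 /coprod_coef.
  under sum_cls_ext => M do rewrite factor_lemma.
  rewrite sum_clsM => /eqP; rewrite mulf_eq0 => /orP[|/eqP //].
  have aX : (aut X)%:R != 0 :> C by rewrite pnatr_eq0 -lt0n aut_gt0.
  have aY : (aut Y)%:R != 0 :> C by rewrite pnatr_eq0 -lt0n aut_gt0.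
  have vz : vpar k C != 0.
    by rewrite /vpar sqrtC_eq0 pnatr_eq0 -lt0n; apply/card_gt0P; exists 0.
  by rewrite !mulf_eq0 (negbTE aX) (negbTE aY) (negbTE (expfz_neq0 _ vz)).
transitivity (sum_cls (fun M : Mod s0 s1 emb (m1 + m2) => x _ M / (aut M)%:R *
   sum_cls (fun X : Mod s0 s1 emb m1 => sum_cls (fun Y : Mod s0 s1 emb m2 =>
      if val Y (evec L i) == 1%:M then ((hallnum M X Y)%:R : C) else 0)))).
  apply: sum_cls_ext => M; case: (eqVneq (x _ M) 0) => [->|nz]; first by rewrite !mul0r.
  by rewrite T1 // mulr1.
have step1 : forall M : Mod s0 s1 emb (m1 + m2), x _ M / (aut M)%:R *
   sum_cls (fun X : Mod s0 s1 emb m1 => sum_cls (fun Y : Mod s0 s1 emb m2 =>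
      if val Y (evec L i) == 1%:M then ((hallnum M X Y)%:R : C) else 0)) =
   sum_cls (fun X : Mod s0 s1 emb m1 => sum_cls (fun Y : Mod s0 s1 emb m2 =>
      if val Y (evec L i) == 1%:M then x _ M / (aut M)%:R * (hallnum M X Y)%:R else 0)).
  move=> M; rewrite -sum_clsM; apply: sum_cls_ext => X; rewrite -sum_clsM.
  by apply: sum_cls_ext => Y; case: eqP; rewrite ?mulr0.
rewrite (sum_cls_ext step1) sum_cls_swap; apply: sum_cls0 => X.
rewrite sum_cls_swap; apply: sum_cls0 => Y.
case: eqP => _; first exact: G0.
by apply: sum_cls0.
Qed.
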